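(* Let $\mathcal{H}_A\cong\mathbb{C}^{d_A}$, $\mathcal{H}_B\cong\mathbb{C}^{d_B}$ with $d_A,d_B\ge 2$ and computational bases $\{|a\rangle\}$, $\{|b\rangle\}$. There is no operator of the form $O=\sum_{\vec a\in\mathbb{Z}_{d_A}^3,\vec b\in\mathbb{Z}_{d_B}^3}O(\vec a,\vec b)\,|\vec a\rangle\langle\vec a|\otimes|\vec b\rangle\langle\vec b|$ (with complex coefficients $O(\vec a,\vec b)$) such that $(\Phi^3_A\otimes\Phi^3_B)(O)=M_{neg}$, where $M_{neg}=\tfrac12\big(W^A_{(1,2,3)}\otimes W^B_{(1,3,2)}+W^A_{(1,3,2)}\otimes W^B_{(1,2,3)}\big)$.
   Context: For $\mathcal{H}\cong\mathbb{C}^d$, $\Phi^3(X)=\int_{\mathrm{Haar}}dU\,U^{\otimes3}XU^{\dagger\otimes3}$ is the 3-fold Haar twirl on $\mathcal{H}^{\otimes3}$; $\Phi^3_A\otimes\Phi^3_B$ is independent twirling of the $A$ and $B$ parts of $(\mathcal{H}_A\otimes\mathcal{H}_B)^{\otimes3}\cong\mathcal{H}_A^{\otimes3}\otimes\mathcal{H}_B^{\otimes3}$. $W_\pi$ ($\pi\in S_3$) is the operator permuting tensor factors, $W_{(1,2,3)}|a_1,a_2,a_3\rangle=|a_2,a_3,a_1\rangle$ and $W_{(1,3,2)}=W_{(1,2,3)}^{-1}$; superscripts indicate the system. $|\vec a\rangle=|a_1\rangle|a_2\rangle|a_3\rangle$. *)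

(* Defs.v *)
(* The complex numbers are  R[i]  for an arbitrary  R : realType
   (every realType is a model of the real numbers, so R[i] is a model of C). *)
From HB Require Import structures.
From mathcomp Require Import all_boot all_order all_algebra spectral.
From mathcomp Require Import complex.
From mathcomp Require Import reals.

Set Implicit Arguments.
Unset Strict Implicit.
Unset Printing Implicit Defensive.

Import Order.TTheory GRing.Theory Num.Theory.
Local Open Scope ring_scope.

Section Haar.
Variable R : realType.
Local Notation C := (R[i]).

(* Polynomial functions of the matrix entries U_ij and their complex conjugates.
   These are exactly the functions that the Haar integral is applied to when
   computing a k-fold twirl. *)
Inductive polyfun (d : nat) : ('M[C]_d -> C) -> Prop :=
| pf_const (c : C) : polyfun (fun _ => c)
| pf_entry (i j : 'I_d) : polyfun (fun U => U i j)
| pf_conj (i j : 'I_d) : polyfun (fun U => (U i j)^*)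
| pf_add f g : polyfun f -> polyfun g -> polyfun (fun U => f U + g U)
| pf_mul f g : polyfun f -> polyfun g -> polyfun (fun U => f U * g U).

(* "f |-> \int_Haar dU f(U)" on U(d), restricted to polynomial functions:
   a normalised, positive, linear functional, depending only on the values on
   unitary matrices, and invariant under left and right translation by unitaries.
   (The Haar integral has these properties, and they determine it uniquely on
   polynomial functions.) *)
Record haar_integral (d : nat) (I : ('M[C]_d -> C) -> C) : Prop := {
  haar_add : forall f g, polyfun f -> polyfun g ->
    I (fun U => f U + g U) = I f + I g;
  haar_scale : forall (c : C) f, polyfun f -> I (fun U => c * f U) = c * I f;
  haar_on_unitary : forall f g, polyfun f -> polyfun g ->
    (forall U : 'M[C]_d, U \is unitarymx -> f U = g U) -> I f = I g;
  haar_normalized : I (fun _ => 1) = 1;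
  haar_positive : forall f, polyfun f ->
    (forall U : 'M[C]_d, U \is unitarymx -> 0 <= f U) -> 0 <= I f;
  haar_left_inv : forall (V : 'M[C]_d) f, V \is unitarymx -> polyfun f ->
    I (fun U => f (V *m U)) = I f;
  haar_right_inv : forall (V : 'M[C]_d) f, V \is unitarymx -> polyfun f ->
    I (fun U => f (U *m V)) = I f
}.

(* Computational basis of H^{\otimes 3}: |a> = |a_1>|a_2>|a_3>, a in Z_d^3. *)
Definition tri (d : nat) := {ffun 'I_3 -> 'I_d}.

(* Operators on (H_A^{\otimes 3}) \otimes (H_B^{\otimes 3}), as matrices
   indexed by the computational basis pairs (a, b). *)
Definition opAB (dA dB : nat) := (tri dA * tri dB)%type -> (tri dA * tri dB)%type -> C.

(* Matrix elements <x| U^{\otimes 3} |y> = U_{x1 y1} U_{x2 y2} U_{x3 y3}. *)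
Definition tens3 (d : nat) (U : 'M[C]_d) (x y : tri d) : C :=
  \prod_(i < 3) U (x i) (y i).

(* (Phi^3_A \otimes Phi^3_B)(X)
     = \int dU \int dV (U^{(x)3} (x) V^{(x)3}) X (U^{(x)3} (x) V^{(x)3})^dagger,
   computed entrywise. *)
Definition twirlAB (dA dB : nat) (IA : ('M[C]_dA -> C) -> C)
    (IB : ('M[C]_dB -> C) -> C) (X : opAB dA dB) : opAB dA dB :=
  fun x y => IA (fun U => IB (fun V =>
    \sum_(x' : tri dA * tri dB) \sum_(y' : tri dA * tri dB)
       (tens3 U x.1 x'.1 * tens3 V x.2 x'.2) * X x' y'
       * (tens3 U y.1 y'.1 * tens3 V y.2 y'.2)^*)).

(* W_pi for pi in S_3: W_pi |y_1,y_2,y_3> = |y_{pi 1}, y_{pi 2}, y_{pi 3}>,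
   i.e. <x| W_pi |y> = [x = y o pi].  With pi = ordS (0->1->2->0) this is
   W_{(1,2,3)} |a1,a2,a3> = |a2,a3,a1>, and with pi = ord_pred it is
   W_{(1,3,2)} |a1,a2,a3> = |a3,a1,a2> = W_{(1,2,3)}^{-1}. *)
Definition Wperm (d : nat) (pi : 'I_3 -> 'I_3) (x y : tri d) : C :=
  (x == [ffun i => y (pi i)])%:R.

Definition W123 (d : nat) := Wperm (d := d) (@ordS 3).
Definition W132 (d : nat) := Wperm (d := d) (@ord_pred 3).

Definition Mneg (dA dB : nat) : opAB dA dB :=
  fun x y => 2^-1 * (W123 x.1 y.1 * W132 x.2 y.2 + W132 x.1 y.1 * W123 x.2 y.2).

Definition diag_op (dA dB : nat) (c : tri dA * tri dB -> C) : opAB dA dB :=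
  fun x y => if x == y then c x else 0.

End Haar.

(* Main.v *)
Require Import Defs.
From HB Require Import structures.
From mathcomp Require Import all_boot all_order all_algebra spectral.
From mathcomp Require Import complex.
From mathcomp Require Import reals.
From mathcomp Require Import ring.
From Stdlib Require Import FunctionalExtensionality.
Import GRing.Theory Num.Theory.
Local Open Scope ring_scope.
Set Implicit Arguments.
Unset Strict Implicit.

Section Aux.
Variable R : realType.
Local Notation C := (R[i]).

Lemma pf_ext d (f g : 'M[C]_d -> C) : (forall U, f U = g U) -> polyfun f -> polyfun g.
Proof. by move=> e; have -> : f = g by apply: functional_extensionality. Qed.

Lemma pf_sum d (T : Type) (r : seq T) (F : T -> 'M[C]_d -> C) :
  (forall t, polyfun (F t)) -> polyfun (fun U => \sum_(t <- r) F t U).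
Proof.
move=> H; elim: r => [|t r IH].
  by apply: (pf_ext (f := fun _ => 0)) => [U|]; rewrite ?big_nil //; apply: pf_const.
by apply: (pf_ext (f := fun U => F t U + \sum_(t <- r) F t U)) => [U|];
  rewrite ?big_cons //; apply: pf_add.
Qed.

Lemma pf_prod d (T : Type) (r : seq T) (F : T -> 'M[C]_d -> C) :
  (forall t, polyfun (F t)) -> polyfun (fun U => \prod_(t <- r) F t U).
Proof.
move=> H; elim: r => [|t r IH].
  by apply: (pf_ext (f := fun _ => 1)) => [U|]; rewrite ?big_nil //; apply: pf_const.
by apply: (pf_ext (f := fun U => F t U * \prod_(t <- r) F t U)) => [U|];
  rewrite ?big_cons //; apply: pf_mul.
Qed.

Lemma pf_conjf d (f : 'M[C]_d -> C) : polyfun f -> polyfun (fun U => (f U)^*).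
Proof.
elim=> [c|i j|i j|f1 g1 _ H1 _ H2|f1 g1 _ H1 _ H2].
- exact: pf_const.
- exact: pf_conj.
- by apply: (pf_ext (f := fun U => U i j)) => [U|]; rewrite ?conjCK //; apply: pf_entry.
- by apply: (pf_ext (f := fun U => (f1 U)^* + (g1 U)^*)) => [U|]; rewrite ?rmorphD //; apply: pf_add.
- by apply: (pf_ext (f := fun U => (f1 U)^* * (g1 U)^*)) => [U|]; rewrite ?rmorphM //; apply: pf_mul.
Qed.

Lemma pf_tens3 d (x y : tri d) : polyfun (fun U : 'M[C]_d => tens3 U x y).
Proof. by apply: pf_prod => i; apply: pf_entry. Qed.

Lemma pf_scale d (k : C) (f : 'M[C]_d -> C) : polyfun f -> polyfun (fun U => k * f U).
Proof. by move=> H; apply: pf_mul => //; apply: pf_const. Qed.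

Lemma haar0 d (I : ('M[C]_d -> C) -> C) : haar_integral I -> I (fun _ => 0) = 0.
Proof.
move=> HI; have := haar_scale HI 0 (pf_const _ 1).
have -> : (fun _ : 'M[C]_d => 0 * 1) = (fun _ => 0 : C).
  by apply: functional_extensionality => U; rewrite mul0r.
by rewrite mul0r.
Qed.

Lemma haar_sum d (I : ('M[C]_d -> C) -> C) (T : Type) (r : seq T) (k : T -> C)
   (F : T -> 'M[C]_d -> C) : haar_integral I -> (forall t, polyfun (F t)) ->
  I (fun U => \sum_(t <- r) k t * F t U) = \sum_(t <- r) k t * I (F t).
Proof.
move=> HI H; elim: r => [|t r IH].
  rewrite big_nil; rewrite -[RHS](haar0 HI); congr (I _).
  by apply: functional_extensionality => U; rewrite big_nil.
have -> : (fun U => \sum_(t0 <- t :: r) k t0 * F t0 U) =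
   (fun U => k t * F t U + \sum_(t0 <- r) k t0 * F t0 U).
  by apply: functional_extensionality => U; rewrite big_cons.
rewrite haar_add //; last first.
- by apply: pf_sum => t0; apply: pf_scale.
- by apply: pf_scale.
by rewrite haar_scale // IH big_cons.
Qed.

End Aux.
Section Aux2.
Variable R : realType.
Local Notation C := (R[i]).

Definition gram d (U : 'M[C]_d) (j k : 'I_d) := \sum_a U a j * (U a k)^*.

Lemma gram_unitary d (U : 'M[C]_d) j k : U \is unitarymx -> gram U j k = (j == k)%:R.
Proof.
rewrite -trmx_unitary => /unitarymxP e.
have := congr1 (fun M : 'M[C]_d => M j k) e.
rewrite /= !mxE => <-; apply: eq_bigr => a _; rewrite !mxE.
done.
Qed.

Lemma Kpi d (U : 'M[C]_d) (pi : 'I_3 -> 'I_3) (z : tri d) : injective pi ->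
  \sum_(x : tri d) tens3 U x z * (tens3 U [ffun i => x (pi i)] z)^* =
  \prod_i gram U (z (pi i)) (z i).
Proof.
move=> pinj.
pose H (w : tri d) := \prod_i (U (w i) (z (pi i)) * (U (w i) (z i))^*).
pose h (x : tri d) : tri d := [ffun i => x (pi i)].
have hinj : injective h.
  move=> x1 x2 /ffunP e; apply/ffunP => j.
  have := e (invF pinj j); rewrite !ffunE f_invF //.
transitivity (\sum_(w : tri d) H w).
  rewrite [RHS](reindex_inj hinj); apply: eq_bigr => x _; rewrite /tens3 rmorph_prod (reindex_inj pinj) /=.
  rewrite -big_split /=; apply: eq_bigr => i _; rewrite !ffunE //.
by rewrite /H /gram bigA_distr_bigA.
Qed.


Lemma K_eq d (U : 'M[C]_d) (z : tri d) : U \is unitarymx ->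
  \sum_(x : tri d) tens3 U x z * (tens3 U [ffun i => x (ordS i)] z)^* =
  \sum_(x : tri d) tens3 U x z * (tens3 U [ffun i => x (ord_pred i)] z)^*.
Proof.
move=> Uu; rewrite !Kpi; [| exact: ord_pred_inj | exact: ordS_inj].
rewrite [RHS](reindex_inj (@ordS_inj 3)) /=; apply: eq_bigr => i _.
by rewrite ordSK !gram_unitary // eq_sym.
Qed.

Lemma sum_ind (T : finType) (a : T) (g : T -> C) :
  \sum_(y : T) (y == a)%:R * g y = g a.
Proof.
rewrite (bigD1 a) //= eqxx mul1r big1 ?addr0 // => y /negbTE ->; by rewrite mul0r.
Qed.

Lemma bracketA d (U : 'M[C]_d) (z : tri d) : U \is unitarymx ->
  \sum_(x : tri d) \sum_(y : tri d)
     (W123 R y x - W132 R y x) * (tens3 U x z * (tens3 U y z)^*) = 0.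
Proof.
move=> Uu.
have E : forall x : tri d, \sum_(y : tri d) (W123 R y x - W132 R y x) * (tens3 U x z * (tens3 U y z)^*)
  = tens3 U x z * (tens3 U [ffun i => x (ordS i)] z)^*
    - tens3 U x z * (tens3 U [ffun i => x (ord_pred i)] z)^*.
  move=> x; rewrite /W123 /W132 /Wperm.
  under eq_bigr => y _ do rewrite mulrBl.
  by rewrite sumrB !sum_ind.
by rewrite (eq_bigr _ (fun x _ => E x)) sumrB K_eq // subrr.
Qed.

Lemma factor_sum (T1 T2 : finType) (a : T1 -> T1 -> C) (b : T2 -> T2 -> C) :
  \sum_(p : (T1 * T2) * (T1 * T2)) a p.1.1 p.2.1 * b p.1.2 p.2.2 =
  (\sum_x1 \sum_y1 a x1 y1) * (\sum_x2 \sum_y2 b x2 y2).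
Proof.
symmetry; rewrite mulr_suml.
under eq_bigr => x1 _ do rewrite mulr_suml.
under eq_bigr => x1 _ do under eq_bigr => y1 _ do rewrite mulr_sumr.
under eq_bigr => x1 _ do under eq_bigr => y1 _ do under eq_bigr => x2 _ do rewrite mulr_sumr.
under eq_bigr => x1 _ do rewrite exchange_big.
under eq_bigr => x1 _ do under eq_bigr => x2 _ do rewrite pair_bigA /=.
by rewrite pair_bigA /= pair_bigA /=.
Qed.


Definition wit d (h : (1 < d)%N) : tri d :=
  [ffun i : 'I_3 => if i == ord0 then Ordinal h else Ordinal (ltnW h)].

Lemma wit1 d (h : (1 < d)%N) :
  [ffun i => wit h (ordS i)] != [ffun i => wit h (ord_pred i)] :> tri d.
Proof.
apply/eqP => /ffunP /(_ ord_max); rewrite !ffunE.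
have -> : (ordS (ord_max : 'I_3) == ord0) = true by [].
have -> : (ord_pred (ord_max : 'I_3) == ord0) = false by [].
by move/(congr1 val).
Qed.

Lemma wit2 d (h : (1 < d)%N) :
  wit h != [ffun i => [ffun j => wit h (ord_pred j)] (ord_pred i)] :> tri d.
Proof.
apply/eqP => /ffunP /(_ ord0); rewrite !ffunE.
have -> : (ord_pred (ord_pred (ord0 : 'I_3)) == ord0) = false by [].
by rewrite eqxx; move/(congr1 val).
Qed.

Lemma diag_collapse dA dB (c : tri dA * tri dB -> C) (x : tri dA * tri dB) (g : tri dA * tri dB -> C) (a : C) :
  \sum_y (a * diag_op c x y) * g y = a * c x * g x.
Proof.
rewrite (bigD1 x) //= /diag_op eqxx big1 ?addr0 // => y.
by rewrite eq_sym => /negbTE ->; rewrite mulr0 mul0r.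
Qed.

Lemma sumB (T1 : finType) (W : T1 -> T1 -> C) (e f : T1) :
  \sum_x \sum_y W x y * ((y == e)%:R * (x == f)%:R) = W f e.
Proof.
transitivity (\sum_x (x == f)%:R * \sum_y (y == e)%:R * W x y).
  apply: eq_bigr => x _; rewrite mulr_sumr; apply: eq_bigr => y _; ring.
by rewrite sum_ind sum_ind.
Qed.

Lemma sumA2 d (h : (1 < d)%N) :
  \sum_(x : tri d) \sum_(y : tri d) W132 R x y * (W123 R y x - W132 R y x) != 0.
Proof.
rewrite exchange_big /=.
have E : forall y : tri d, \sum_(x : tri d) W132 R x y * (W123 R y x - W132 R y x)
   = ((y != [ffun i => [ffun j => y (ord_pred j)] (ord_pred i)]) : nat)%:R.
  move=> y; rewrite /W132 /W123 /Wperm sum_ind.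
  have -> : [ffun i => [ffun j => y (ord_pred j)] (ordS i)] = y.
    by apply/ffunP => i; rewrite !ffunE ordSK.
  by rewrite eqxx; case: (y == _); rewrite ?subrr ?subr0.
rewrite (eq_bigr _ (fun y _ => E y)) -natr_sum pnatr_eq0 (bigD1 (wit h)) //=.
by rewrite wit2.
Qed.

End Aux2.
Theorem proposition2 (R : realType) (dA dB : nat) (hdA : (2 <= dA)%N) (hdB : (2 <= dB)%N)
    (IA : ('M[R[i]]_dA -> R[i]) -> R[i]) (IB : ('M[R[i]]_dB -> R[i]) -> R[i]) :
  haar_integral IA -> haar_integral IB ->
  ~ exists c : tri dA * tri dB -> R[i],
      forall x y, twirlAB IA IB (diag_op c) x y = @Mneg R dA dB x y.
Proof.
move=> HA HB [c Hc].
pose e := wit hdB.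
pose X := fun (y x : tri dA * tri dB) => (W123 R y.1 x.1 - W132 R y.1 x.1) *
   ((y.2 == e)%:R * (x.2 == [ffun i => e (ordS i)])%:R).
have L2 : \sum_x \sum_y Mneg R x y * X y x != 0.
  rewrite pair_bigA /=.
  rewrite (eq_bigr (fun p : (tri dA * tri dB) * (tri dA * tri dB) => 2^-1 *
     ((W123 R p.1.1 p.2.1 * (W123 R p.2.1 p.1.1 - W132 R p.2.1 p.1.1)) *
        (W132 R p.1.2 p.2.2 * ((p.2.2 == e)%:R * (p.1.2 == [ffun i => e (ordS i)])%:R)) +
      (W132 R p.1.1 p.2.1 * (W123 R p.2.1 p.1.1 - W132 R p.2.1 p.1.1)) *
        (W123 R p.1.2 p.2.2 * ((p.2.2 == e)%:R * (p.1.2 == [ffun i => e (ordS i)])%:R))))); last first.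
    by move=> p _; rewrite /Mneg /X; ring.
  rewrite -mulr_sumr big_split /=.
  rewrite (factor_sum (fun x y => W123 R x y * (W123 R y x - W132 R y x))
                      (fun x y => W132 R x y * ((y == e)%:R * (x == [ffun i => e (ordS i)])%:R))).
  rewrite (factor_sum (fun x y => W132 R x y * (W123 R y x - W132 R y x))
                      (fun x y => W123 R x y * ((y == e)%:R * (x == [ffun i => e (ordS i)])%:R))).
  rewrite !sumB /W132 /W123 /Wperm eqxx (negbTE (wit1 hdB)) mulr0 add0r mulr1.
  rewrite mulf_neq0 ?invr_neq0 ?pnatr_eq0 //.
  exact: sumA2.
have L1 : \sum_x \sum_y twirlAB IA IB (diag_op c) x y * X y x = 0.
  rewrite pair_bigA /=.
  pose F := fun (p : (tri dA * tri dB) * (tri dA * tri dB)) (U : 'M[R[i]]_dA) =>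
    IB (fun V => \sum_(x' : tri dA * tri dB) \sum_(y' : tri dA * tri dB)
       (tens3 U p.1.1 x'.1 * tens3 V p.1.2 x'.2) * diag_op c x' y'
       * (tens3 U p.2.1 y'.1 * tens3 V p.2.2 y'.2)^*).
  have pfF : forall p, polyfun (F p).
    move=> p.
    pose k := fun (q : (tri dA * tri dB) * (tri dA * tri dB)) (U : 'M[R[i]]_dA) =>
      tens3 U p.1.1 q.1.1 * (tens3 U p.2.1 q.2.1)^* * diag_op c q.1 q.2.
    pose h := fun (q : (tri dA * tri dB) * (tri dA * tri dB)) (V : 'M[R[i]]_dB) =>
      tens3 V p.1.2 q.1.2 * (tens3 V p.2.2 q.2.2)^*.
    apply: (pf_ext (f := fun U => \sum_q k q U * IB (h q))).
      move=> U; rewrite /F.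
      transitivity (IB (fun V => \sum_q k q U * h q V)).
        rewrite haar_sum // => q; apply: pf_mul; first exact: pf_tens3.
        exact/pf_conjf/pf_tens3.
      congr (IB _); apply: functional_extensionality => V.
      rewrite pair_bigA /=; apply: eq_bigr => q _.
      by rewrite /k /h rmorphM /=; ring.
    apply: pf_sum => q; apply: pf_mul; last exact: pf_const.
    apply: pf_mul; last exact: pf_const.
    apply: pf_mul; first exact: pf_tens3.
    exact/pf_conjf/pf_tens3.
  transitivity (IA (fun U => \sum_p X p.2 p.1 * F p U)).
    rewrite haar_sum //; apply: eq_bigr => p _; by rewrite mulrC.
  transitivity (IA (fun _ => 0)); last exact: haar0 HA.
  apply: haar_on_unitary => //; first by apply: pf_sum => p; apply: pf_scale.
    exact: pf_const.
  move=> U Uu.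
  transitivity (IB (fun V => \sum_p X p.2 p.1 *
       (\sum_(x' : tri dA * tri dB) \sum_(y' : tri dA * tri dB)
       (tens3 U p.1.1 x'.1 * tens3 V p.1.2 x'.2) * diag_op c x' y'
       * (tens3 U p.2.1 y'.1 * tens3 V p.2.2 y'.2)^*))).
    rewrite haar_sum // => p.
    apply: pf_sum => x'; apply: pf_sum => y'.
    apply: pf_mul; first apply: pf_mul.
    - by apply: pf_mul; [exact: pf_const | exact: pf_tens3].
    - exact: pf_const.
    - by apply/pf_conjf/pf_mul; [exact: pf_const | exact: pf_tens3].
  transitivity (IB (fun _ => 0)); last exact: haar0 HB.
  congr (IB _); apply: functional_extensionality => V.
  under eq_bigr => p _ do under eq_bigr => x' _ do rewrite diag_collapse.
  under eq_bigr => p _ do rewrite mulr_sumr.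
  rewrite exchange_big /=; apply: big1 => x' _.
  rewrite (eq_bigr (fun p : (tri dA * tri dB) * (tri dA * tri dB) => c x' *
     (((W123 R p.2.1 p.1.1 - W132 R p.2.1 p.1.1) * (tens3 U p.1.1 x'.1 * (tens3 U p.2.1 x'.1)^*)) *
      (((p.2.2 == e)%:R * (p.1.2 == [ffun i => e (ordS i)])%:R) *
        (tens3 V p.1.2 x'.2 * (tens3 V p.2.2 x'.2)^*))))); last first.
    by move=> p _; rewrite /X rmorphM /=; ring.
  rewrite -mulr_sumr.
  rewrite (factor_sum (fun x y => (W123 R y x - W132 R y x) * (tens3 U x x'.1 * (tens3 U y x'.1)^*))
     (fun x y => ((y == e)%:R * (x == [ffun i => e (ordS i)])%:R) *
        (tens3 V x x'.2 * (tens3 V y x'.2)^*))).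
  by rewrite bracketA // mul0r mulr0.
move: L2; under eq_bigr => x _ do under eq_bigr => y _ do rewrite -Hc.
by rewrite L1 eqxx.
Qed.
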